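(* Let $k$ be a field, $S=k[x_1,\dots,x_n]$, and let $\Delta$ be a connected simplicial graph on $[n]$ of genus $0$ (a tree). Let $M$ be an indecomposable square-free $S$-module (not necessarily Cohen--Macaulay) with support on $\Delta$, locally of rank $1$, of multi-degree $(0,0,\dots,0)$. Then $M$ is isomorphic to a module for which, after identifying $M_{\{v\}}=k$ for every vertex $v$ and $M_e=k$ for every edge $e$, each map $\varphi_{ve}:M_{\{v\}}\to M_e$ equals $1$ (the identity) if $v\in e$ (and is $0$ otherwise).
   Context: $S$ is $\mathbf{Z}^n$-graded. A finitely generated $\mathbf{Z}^n$-graded $S$-module $M$ is square-free if $M_{\mathbf{a}}=0$ for $\mathbf{a}\notin\mathbf{N}^n$ and multiplication by $x_i$, $M_{\mathbf{a}}\to M_{\mathbf{a}+\mathbf{e}_i}$, is bijective whenever $\mathbf{a}\in\mathbf{N}^n$ and $a_i>0$. For $F\subseteq[n]$, $M_F$ is the component of $M$ in the degree given by the indicator vector of $F$, and for $F\subseteq G$, $\varphi_{FG}:M_F\to M_G$ is multiplication by $\prod_{i\in G\setminus F}x_i$. A simplicial graph on $[n]$ is a $1$-dimensional simplicial complex $\Delta$ with vertex set $[n]$; $I_\Delta$ is generated by $\prod_{i\in\sigma}x_i$ for $\sigma\notin\Delta$. $M$ has support on $\Delta$ if its annihilator is $I_\Delta$. $M$ is locally of rank $1$ if $\dim_k M_F=1$ for every edge $F$. The multi-degree is $\mathbf{d}$ with $d_i=\dim_k M_{\{i\}}-1$. The genus is $\dim_k\widetilde H_1(\Delta;k)$. 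*)

(* Defs.v *)
From HB Require Import structures.
From mathcomp Require Import all_boot all_order all_algebra.
From mathcomp Require Import mpoly.
Set Implicit Arguments. Unset Strict Implicit. Unset Printing Implicit Defensive.
Import Order.TTheory GRing.Theory Num.Theory.
Local Open Scope ring_scope.

Definition deg (n : nat) := {ffun 'I_n -> int}.
Definition degle n (a b : deg n) : bool := [forall i, a i <= b i].
Definition degnonneg n (a : deg n) : bool := [forall i, 0 <= a i].
Definition degS n (a : deg n) (i : 'I_n) : deg n :=
  [ffun j => a j + (j == i)%:R].
Definition degaddm n (a : deg n) (m : 'X_{1..n}) : deg n :=
  [ffun j => a j + (m j)%:Z].
Definition ind n (F : {set 'I_n}) : deg n := [ffun j => ((j \in F) : nat)%:Z].

(* A Z^n-graded S-module, S = k[x_1..x_n]: graded pieces M_a = k^(gdim a)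
   (row vectors), and gmul a b = multiplication by x^(b-a) : M_a -> M_b
   (acting on the right on row vectors), meaningful for a <= b. *)
Record gmod (k : fieldType) (n : nat) := GMod {
  gdim : deg n -> nat;
  gmul : forall a b : deg n, 'M[k]_(gdim a, gdim b);
  gmul_id : forall a, gmul a a = 1%:M;
  gmul_comp : forall a b c, degle a b -> degle b c ->
     gmul a b *m gmul b c = gmul a c }.

Section Defs.
Variables (k : fieldType) (n : nat).

Definition fingen (M : gmod k n) : Prop :=
  exists s : seq {a : deg n & 'rV[k]_(gdim M a)},
    forall b : deg n,
      (1%:M <= \sum_(g <- s | degle (tag g) b)
                   << tagged g *m gmul M (tag g) b >>)%MS.

Definition sqfree (M : gmod k n) : Prop :=
  (forall a, ~~ degnonneg a -> gdim M a = 0%N) /\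
  (forall a i, degnonneg a -> 0 < a i ->
     row_free (gmul M a (degS a i)) && row_full (gmul M a (degS a i))).

(* f annihilates M: f . v = 0 for every homogeneous v; the component of
   f . v (v in M_a) in degree a+m is  f_m x^m v. *)
Definition annihilates (M : gmod k n) (f : {mpoly k[n]}) : Prop :=
  forall (a : deg n) (v : 'rV[k]_(gdim M a)) (m : 'X_{1..n}),
    f@_m *: (v *m gmul M a (degaddm a m)) = 0.

Definition in_ideal (G : {mpoly k[n]} -> Prop) (f : {mpoly k[n]}) : Prop :=
  exists s : seq ({mpoly k[n]} * {mpoly k[n]}),
    (forall p, p \in s -> G p.2) /\ f = \sum_(p <- s) p.1 * p.2.

Definition I_Delta (D : {set {set 'I_n}}) (f : {mpoly k[n]}) : Prop :=
  in_ideal (fun g => exists sigma : {set 'I_n},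
              sigma \notin D /\ g = \prod_(i in sigma) 'X_i) f.

Definition support_on (M : gmod k n) (D : {set {set 'I_n}}) : Prop :=
  forall f, annihilates M f <-> I_Delta D f.

Definition loc_rank1 (M : gmod k n) (D : {set {set 'I_n}}) : Prop :=
  forall F, F \in D -> #|F| = 2 -> gdim M (ind F) = 1%N.

(* multi-degree (0,...,0): dim M_{i} - 1 = 0 *)
Definition multideg0 (M : gmod k n) : Prop :=
  forall i : 'I_n, (gdim M (ind [set i]))%:Z - 1 = 0.

Definition gsub (M : gmod k n) (U : forall a, 'M[k]_(gdim M a)) : Prop :=
  forall a b, degle a b -> (U a *m gmul M a b <= U b)%MS.

Definition decomposable (M : gmod k n) : Prop :=
  exists (U W : forall a, 'M[k]_(gdim M a)),
    [/\ @gsub M U, @gsub M W,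
        (forall a, (U a + W a == 1%:M)%MS && mxdirect (U a + W a)),
        (exists a, U a != 0) & (exists a, W a != 0)].

Definition indecomposable (M : gmod k n) : Prop :=
  (exists a, (0 < gdim M a)%N) /\ ~ decomposable M.

Definition giso (M N : gmod k n) : Prop :=
  exists f : forall a, 'M[k]_(gdim M a, gdim N a),
    (forall a, row_free (f a) && row_full (f a)) /\
    (forall a b, degle a b -> f a *m gmul N a b = gmul M a b *m f b).

End Defs.

Definition simplicial_graph n (D : {set {set 'I_n}}) : Prop :=
  [/\ forall F G : {set 'I_n}, F \in D -> G \subset F -> G \in D,
      forall v : 'I_n, [set v] \in D,
      forall F, F \in D -> (#|F| <= 2)%N &
      exists F, (F \in D) && (#|F| == 2)%N].

Definition adj n (D : {set {set 'I_n}}) : rel 'I_n :=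
  fun i j => (i != j) && ([set i; j] \in D).

Definition connected_cx n (D : {set {set 'I_n}}) : Prop :=
  forall i j : 'I_n, connect (adj D) i j.

(* edges and the simplicial boundary map C_1 -> C_0 (edge {i<j} |-> j - i) *)
Definition edges n (D : {set {set 'I_n}}) : {set {set 'I_n}} :=
  [set F in D | #|F| == 2%N].

Definition bdmx (k : fieldType) n (D : {set {set 'I_n}}) :
  'M[k]_(#|edges D|, n) :=
  \matrix_(r < #|edges D|, j < n)
    (let e : {set 'I_n} := @enum_val _ (mem (edges D)) r in
     if j \in e then (if [exists i in e, (i < j)%N] then 1 else -1) else 0).

(* genus = dim_k H~_1(Delta; k) = dim ker (boundary_1) *)
Definition genus (k : fieldType) n (D : {set {set 'I_n}}) : nat :=
  (#|edges D| - \rank (bdmx k D))%N.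

(* Main.v *)
Require Import Defs.
From HB Require Import structures.
From mathcomp Require Import all_boot all_order all_algebra.
From mathcomp Require Import mpoly zify.
Set Implicit Arguments. Unset Strict Implicit. Unset Printing Implicit Defensive.
Import Order.TTheory GRing.Theory Num.Theory.
Local Open Scope ring_scope.

Definition isomx (k : fieldType) m p (A : 'M[k]_(m,p)) := row_free A && row_full A.

Lemma isomx_mul (k : fieldType) m r p (A : 'M[k]_(m,r)) (B : 'M[k]_(r,p)) :
  isomx A -> isomx B -> isomx (A *m B).
Proof.
rewrite /isomx -!row_leq_rank -!col_leq_rank => /andP[h1 h2] /andP[h3 h4].
have r1 := rank_leq_row A; have r2 := rank_leq_col A.
have r3 := rank_leq_row B; have r4 := rank_leq_col B.
rewrite mxrankMfree; last by rewrite -row_leq_rank.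
apply/andP; split; lia.
Qed.

Lemma isomx1 (k : fieldType) m : isomx (1%:M : 'M[k]_m).
Proof. by rewrite /isomx -row_leq_rank -col_leq_rank mxrank1 leqnn. Qed.

Section S.
Variables (k : fieldType) (n : nat) (M : gmod k n).
Hypothesis sqM : sqfree M.

Definition supp (a : deg n) : {set 'I_n} := [set i | 0 < a i].

Lemma gdim_nonneg a : (0 < gdim M a)%N -> degnonneg a.
Proof. case: sqM => h _; apply: contraLR => /h ->. by []. Qed.

Definition mes (a b : deg n) : nat := (\sum_(i < n) `|b i - a i|)%N.

Lemma L_iso b : forall a, degnonneg a -> degle a b ->
  (forall i, 0 < b i -> 0 < a i) -> isomx (gmul M a b).
Proof.
suff H : forall N a, (mes a b <= N)%N -> degnonneg a -> degle a b ->
  (forall i, 0 < b i -> 0 < a i) -> isomx (gmul M a b).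
  by move=> a; apply: (H _ a (leqnn _)).
elim=> [|N IH] a hm ha hab hs.
  have -> : a = b.
    apply/ffunP=> i; move: hm; rewrite /mes leqn0 sum_nat_eq0 => /forallP/(_ i)/=.
    by rewrite absz_eq0 subr_eq0 => /eqP.
  by rewrite gmul_id isomx1.
have [->|neab] := eqVneq a b; first by rewrite gmul_id isomx1.
have [i hi] : exists i, a i < b i.
  apply/existsP; apply: contraNT neab; rewrite negb_exists => /forallP h.
  apply/eqP/ffunP=> j; have := h j; have := (forallP hab) j; rewrite /= => h1 h2.
  by apply/eqP; rewrite eq_le h1 /= leNgt.
have hai : 0 < a i.
  apply: hs; apply: le_lt_trans hi; exact: (forallP ha i).
have e1 : degle a (degS a i).
  by apply/forallP=> j; rewrite ffunE lerDl ler0n.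
have e2 : degle (degS a i) b.
  apply/forallP=> j; rewrite ffunE; have [->|nj] := eqVneq j i.
    by move: hi; rewrite /=; lia.
  by rewrite /= addr0; exact: (forallP hab j).
rewrite -(gmul_comp M e1 e2); apply: isomx_mul.
  by case: sqM => _ /(_ a i ha hai).
apply: IH.
- move: hm; rewrite /mes (bigD1 i) //= [X in (X <= N)%N](bigD1 i) //=.
  have -> : (\sum_(j < n | j != i) `|b j - degS a i j| = \sum_(j < n | j != i) `|b j - a j|)%N.
    by apply: eq_bigr=> j nj; rewrite ffunE (negPf nj) addr0.
  rewrite ffunE eqxx /=.
  have h1 : (`|b i - a i|%N)%:Z = b i - a i.
    by rewrite gez0_abs // subr_ge0 ltW.
  have h2 : (`|(b i - (a i + 1))%R|%N)%:Z = b i - (a i + 1).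
    by rewrite gez0_abs // subr_ge0; move: hi; lia.
  set x := `|(b i - a i)%R|%N in h1 *. set y := `|(b i - (a i + 1))%R|%N in h2 *. set s := (\sum_(j < n | j != i) _)%N. clearbody x y s. move: h1 h2 hi; lia.
- apply/forallP=> j; rewrite ffunE; apply: addr_ge0; first exact: (forallP ha j).
  by rewrite ler0n.
- exact: e2.
- move=> j /hs; rewrite ffunE => h; apply: lt_le_trans h _; rewrite lerDl ler0n //.
Qed.

Lemma constmx_neq0 p (h : (0 < p)%N) : (const_mx 1 : 'rV[k]_p) != 0.
Proof.
apply/eqP=> /matrixP/(_ 0 (Ordinal h)); rewrite !mxE => /eqP; by rewrite oner_eq0.
Qed.

Lemma T1 (D : {set {set 'I_n}}) : support_on M D -> forall a,
  degnonneg a -> supp a \notin D -> gdim M a = 0%N.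
Proof.
move=> hsup a ha hD.
pose m : 'X_{1..n} := (\sum_(i in supp a) U_(i))%MM.
pose f : {mpoly k[n]} := \prod_(i in supp a) 'X_i.
have hf : f = 'X_[m].
  by rewrite /f /m (big_morph (@mpolyX n k) (@mpolyXD n k) (@mpolyX0 n k)).
have hI : I_Delta D f.
  exists [:: (1, f)]; split.
    by move=> p; rewrite inE => /eqP -> /=; exists (supp a).
  by rewrite big_seq1 mul1r.
have := (proj2 (hsup f) hI a); rewrite hf => han.
have hm : forall j, (0 < m j)%N -> j \in supp a.
  move=> j; apply: contraTT => hj; rewrite -leqNgt leqn0 mnm_sumE; apply/eqP.
  by apply: big1 => i hi; rewrite mnm1E; case: eqP => // e; rewrite -e hi in hj.
have hiso : isomx (gmul M a (degaddm a m)).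
  apply: L_iso => //.
    by apply/forallP=> j; rewrite ffunE lerDl.
  move=> j; rewrite ffunE; case: (posnP (m j)) => [->|/hm].
    by rewrite addr0.
  by rewrite inE.
apply/eqP; apply: contraT; rewrite -lt0n => hp.
have := han (const_mx 1) m; rewrite mcoeffX eqxx scale1r => /eqP.
rewrite mulmx_free_eq0; last by case/andP: hiso.
by rewrite (negPf (constmx_neq0 hp)).
Qed.

Lemma supp_ind (s : {set 'I_n}) : supp (ind s) = s.
Proof. by apply/setP=> i; rewrite inE ffunE; case: (i \in s). Qed.

Lemma ind_nonneg (s : {set 'I_n}) : degnonneg (ind s).
Proof. by apply/forallP=> i; rewrite ffunE; case: (i \in s). Qed.

Lemma ind_le (s t : {set 'I_n}) : s \subset t -> degle (ind s) (ind t).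
Proof.
move=> st; apply/forallP=> i; rewrite !ffunE.
by case hs: (i \in s); rewrite ?ler0n // (subsetP st _ hs).
Qed.

Lemma ind_supp_le a : degnonneg a -> degle (ind (supp a)) a.
Proof.
move=> ha; apply/forallP=> i; rewrite !ffunE inE.
by move: (forallP ha i); case: (a i) => [[|m]|m].
Qed.

Lemma supp_le a b : degle a b -> degnonneg a -> supp a \subset supp b.
Proof.
move=> hab ha; apply/subsetP=> i; rewrite !inE => h.
exact: lt_le_trans h (forallP hab i).
Qed.

Lemma mx0_rows p q (A : 'M[k]_(p,q)) : p = 0%N -> A = 0.
Proof. move=> h; apply/eqP; rewrite -mxrank_eq0; have := rank_leq_row A; lia. Qed.
Lemma mx0_cols p q (A : 'M[k]_(p,q)) : q = 0%N -> A = 0.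
Proof. move=> h; apply/eqP; rewrite -mxrank_eq0; have := rank_leq_col A; lia. Qed.

Lemma GD (D : {set {set 'I_n}}) (hsup : support_on M D) (cls : {set 'I_n} -> bool) :
  (forall s t, s \in D -> t \in D -> s \subset t -> cls s != cls t ->
     gmul M (ind s) (ind t) = 0) ->
  (exists s, [/\ s \in D, cls s & (0 < gdim M (ind s))%N]) ->
  (exists s, [/\ s \in D, ~~ cls s & (0 < gdim M (ind s))%N]) ->
  decomposable M.
Proof.
move=> hcross [s1 [s1D c1 d1]] [s2 [s2D c2 d2]].
have zc : forall a b, degle a b -> cls (supp a) != cls (supp b) -> gmul M a b = 0.
  move=> a b hab hc.
  case: (posnP (gdim M a)) => [h0|pa]; first exact: mx0_rows.
  case: (posnP (gdim M b)) => [h0|pb]; first exact: mx0_cols.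
  have ha := gdim_nonneg pa; have hb := gdim_nonneg pb.
  have sD : supp a \in D.
    by apply: contraLR pa => h; rewrite (T1 hsup ha h).
  have tD : supp b \in D.
    by apply: contraLR pb => h; rewrite (T1 hsup hb h).
  have sub := supp_le hab ha.
  have e0 := hcross _ _ sD tD sub hc.
  have l1 := ind_supp_le ha.
  have hiso : isomx (gmul M (ind (supp a)) a).
    apply: L_iso => //; first exact: ind_nonneg.
    by move=> i hi; rewrite ffunE inE hi.
  apply: (row_full_inj (proj2 (andP hiso))).
  rewrite (gmul_comp M l1 hab) mulmx0.
  rewrite -(gmul_comp M (ind_le sub) (ind_supp_le hb)) e0 mul0mx //.
pose U := fun a => if cls (supp a) then (1%:M : 'M[k]_(gdim M a)) else 0.
pose W := fun a => if cls (supp a) then 0 else (1%:M : 'M[k]_(gdim M a)).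
have n1 : forall p, (0 < p)%N -> (1%:M : 'M[k]_p) != 0.
  by move=> p hp; rewrite -mxrank_eq0 mxrank1 -lt0n.
exists U, W; split.
- move=> a b hab; rewrite /U; case ca: (cls (supp a)); last by rewrite mul0mx sub0mx.
  case cb: (cls (supp b)); first exact: submx1.
  by rewrite zc ?ca ?cb // mulmx0 sub0mx.
- move=> a b hab; rewrite /W; case ca: (cls (supp a)); first by rewrite mul0mx sub0mx.
  case cb: (cls (supp b)); last exact: submx1.
  by rewrite zc ?ca ?cb // mulmx0 sub0mx.
- move=> a; rewrite /U /W; case: (cls (supp a)); apply/andP; split.
  + by rewrite addsmx0_id !submx_refl.
  + by apply/mxdirect_addsP; rewrite capmx0.
  + by rewrite adds0mx_id !submx_refl.
  + by apply/mxdirect_addsP; rewrite cap0mx.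
- by exists (ind s1); rewrite /U supp_ind c1 n1.
- by exists (ind s2); rewrite /W supp_ind (negPf c2) n1.
Qed.

Lemma other (F : {set 'I_n}) v : #|F| = 2%N -> v \in F -> exists w, w != v /\ F = [set v; w].
Proof.
move=> /eqP/cards2P [x [y [xy ->]]]; rewrite !inE => /orP[]/eqP ->.
  by exists y; rewrite eq_sym.
by exists x; rewrite setUC.
Qed.

Lemma GD2 (D : {set {set 'I_n}}) (hsup : support_on M D) (cls : {set 'I_n} -> bool) :
  (forall F, F \in D -> (#|F| <= 2)%N) ->
  (forall x, cls set0 != cls [set x] -> gmul M (ind set0) (ind [set x]) = 0) ->
  (forall t x, t \in D -> #|t| = 2%N -> x \in t -> cls [set x] != cls t ->
      gmul M (ind [set x]) (ind t) = 0) ->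
  (exists s, [/\ s \in D, cls s & (0 < gdim M (ind s))%N]) ->
  (exists s, [/\ s \in D, ~~ cls s & (0 < gdim M (ind s))%N]) ->
  decomposable M.
Proof.
move=> hc C1 C3; apply: GD => // s t sD tD st hne.
have [est|nst] := eqVneq s t; first by rewrite est eqxx in hne.
have pst : s \proper t by rewrite properEneq nst.
have lt := proper_card pst; have le2 := hc _ tD.
case: (posnP #|s|) => [/cards0_eq s0|sp].
  rewrite s0 in hne *.
  case: (posnP #|t|) => [t0|tp]; first by rewrite t0 in lt.
  have [x xt] : exists x, x \in t by apply/set0Pn; rewrite -card_gt0.
  have l1 : degle (ind set0) (ind [set x]) by apply: ind_le; rewrite sub0set.
  have l2 : degle (ind [set x]) (ind t) by apply: ind_le; rewrite sub1set.
  have [t1|t1] : #|t| = 1%N \/ #|t| = 2%N by lia.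
    have : #|t| == 1%N by rewrite t1.
    case/cards1P=> y ty; rewrite ty in hne *; exact: C1.
  rewrite -(gmul_comp M l1 l2).
  case: (eqVneq (cls set0) (cls [set x])) => [e|ne]; last by rewrite C1 // mul0mx.
  by rewrite (C3 t x) ?mulmx0 // -e.
have s1 : #|s| = 1%N by lia.
have t2 : #|t| = 2%N by lia.
have : #|s| == 1%N by rewrite s1.
case/cards1P=> x sx; rewrite sx in hne st *; apply: C3 => //.
by rewrite -sub1set.
Qed.
End S.


Section G.
Variables (k : fieldType) (n : nat) (D : {set {set 'I_n}}).

Definition adjm (F : {set 'I_n}) : rel 'I_n :=
  fun x y => adj D x y && ([set x; y] != F).

Lemma edgesP x y : adj D x y -> [set x; y] \in edges D.
Proof. by case/andP=> h1 h2; rewrite inE h2 cards2 h1. Qed.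

Lemma ex2 (x y j : 'I_n) : [exists i in [set x; y], (i < j)%N] = (x < j)%N || (y < j)%N.
Proof.
apply/existsP/orP.
  by case=> i /andP[]; rewrite !inE => /orP[]/eqP-> h; [left|right].
by case=> h; [exists x|exists y]; rewrite !inE eqxx ?orbT.
Qed.

Lemma bdrow x y (h : adj D x y) :
  exists2 eps : k, eps * eps = 1 &
    row (enum_rank_in (edgesP h) [set x; y]) (bdmx k D) =
      eps *: (delta_mx 0 y - delta_mx 0 x).
Proof.
have xy : x != y by case/andP: h.
exists (if (x < y)%N then 1 else -1); first by case: ifP; rewrite ?mulr1 ?mulrNN ?mulr1.
apply/rowP=> j; rewrite !mxE enum_rankK_in ?edgesP //= ex2 !inE.
have [->|jx] := eqVneq j x.
  rewrite (negPf xy) ltnn /=.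
  have [hlt|hgt|heq] := ltngtP x y; last by move: xy; rewrite -(inj_eq val_inj) /= heq eqxx.
  - by rewrite mul1r sub0r mulr1n.
  - by rewrite sub0r mulrNN mul1r mulr1n.
have [->|jy] := eqVneq j y.
  rewrite ltnn orbF /=.
  have [hlt|hgt|heq] := ltngtP x y; last by move: xy; rewrite -(inj_eq val_inj) /= heq eqxx.
  - by rewrite mul1r subr0 mulr1n.
  - by rewrite subr0 mulN1r mulr1n.
by rewrite /= subrr mulr0.
Qed.

Lemma pathcomb F (HF : F \in edges D) a b : connect (adjm F) a b ->
  exists c : 'rV[k]_#|edges D|, c 0 (enum_rank_in HF F) = 0 /\
     c *m bdmx k D = delta_mx 0 b - delta_mx 0 a.
Proof.
case/connectP=> p hp ->; elim: p a hp => [|a' p IH] a /=.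
  by move=> _; exists 0; rewrite mxE mul0mx subrr.
case/andP=> /andP[had hne] /IH [c [c0 cB]].
have [eps ee er] := bdrow had.
exists (c + eps *: delta_mx 0 (enum_rank_in (edgesP had) [set a; a'])); split.
  have ne : enum_rank_in (edgesP had) [set a; a'] != enum_rank_in HF F.
    apply: contra hne => /eqP h; have := congr1 enum_val h.
    by rewrite !enum_rankK_in ?edgesP // => ->.
  by rewrite !mxE c0 add0r eqxx eq_sym (negPf ne) mulr0.
rewrite mulmxDl cB -scalemxAl -rowE er scalerA ee scale1r.
by rewrite addrA subrK.
Qed.

Lemma noalt : genus k D = 0%N -> forall u w (h : adj D u w),
  ~~ connect (adjm [set u; w]) w u.
Proof.
move=> hg u w h; apply/negP => hc.
have [c [c0 cB]] := pathcomb (edgesP h) hc.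
have [eps ee er] := bdrow h.
have rf : row_free (bdmx k D).
  rewrite -row_leq_rank; move: hg; rewrite /genus; have := rank_leq_row (bdmx k D); lia.
set r := enum_rank_in (edgesP h) [set u; w] in c0 er.
have : (c + eps *: delta_mx 0 r) *m bdmx k D == 0.
  rewrite mulmxDl cB -scalemxAl -rowE er scalerA ee scale1r.
  by rewrite -opprB addrC subrr.
rewrite mulmx_free_eq0 // => /eqP/matrixP/(_ 0 r); rewrite !mxE c0 !eqxx add0r mulr1 /=.
by move=> e0; move: ee; rewrite e0 mul0r => /eqP; rewrite eq_sym oner_eq0.
Qed.

Lemma adj_sym : ssrbool.symmetric (adj D).
Proof. by move=> a b; rewrite /adj eq_sym setUC. Qed.

Definition adjS (S : {set 'I_n}) : rel 'I_n :=
  fun a b => adj D a b && (a \in S) && (b \in S).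

Lemma adjS_sym S : ssrbool.symmetric (adjS S).
Proof. by move=> a b; rewrite /adjS adj_sym -!andbA [(b \in S) && _]andbC. Qed.

Lemma crossing (e : rel 'I_n) (P : pred 'I_n) a b : connect e a b -> P a -> ~~ P b ->
  exists x y, [/\ P x, ~~ P y & e x y].
Proof.
case/connectP=> p hp ->; elim: p a hp => [|a' p IH] a /=; first by move=> _ ->.
case/andP=> ha hp Pa; case Pa': (P a') => nPb.
  by apply: (IH a' hp); rewrite ?Pa'.
by exists a, a'; rewrite Pa' Pa.
Qed.

Lemma prop1 p (u v : 'rV[k]_p) : p = 1%N -> v != 0 -> exists a, u = a *: v.
Proof.
move=> hp hv; apply/sub_rVP; apply: submx_full.
rewrite -col_leq_rank; have : \rank v != 0%N by rewrite mxrank_eq0.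
have := rank_leq_row v; lia.
Qed.

Lemma propagate (hg : genus k D = 0%N) (hconn : connected_cx D) (n0 : 'I_n)
  (d : {set 'I_n} -> nat) (t : 'I_n -> forall F : {set 'I_n}, 'rV[k]_(d F)) :
  (forall x y, adj D x y -> [/\ t x [set x; y] != 0, t y [set x; y] != 0 & d [set x; y] = 1%N]) ->
  exists lam : 'I_n -> k, (forall v, lam v != 0) /\
    forall x y, adj D x y -> lam x *: t x [set x; y] = lam y *: t y [set x; y].
Proof.
move=> ht.
have key : forall m, (0 < m)%N -> (m <= n)%N -> exists (S : {set 'I_n}) (lam : 'I_n -> k),
  [/\ #|S| = m, n0 \in S, forall b, b \in S -> connect (adjS S) n0 b,
      forall v, v \in S -> lam v != 0 &
      forall x y, x \in S -> y \in S -> adj D x y ->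
         lam x *: t x [set x; y] = lam y *: t y [set x; y]].
  elim=> [//|m IH] _ hm.
  case: (posnP m) => [m0|mp].
    exists [set n0], (fun _ => 1); rewrite m0 cards1; split => //.
    - by rewrite inE.
    - by move=> b; rewrite inE => /eqP ->; exact: connect0.
    - by move=> v _; rewrite oner_eq0.
    - by move=> x y; rewrite !inE => /eqP -> /eqP ->; rewrite /adj eqxx.
  have [S [lam [cS n0S cnS lnz hS]]] := IH mp (ltnW hm).
  have [z0 z0S] : exists z0, z0 \notin S.
    apply/existsP; rewrite -negb_forall; apply/negP => /forallP hall.
    have : S = setT by apply/setP=> v; rewrite inE hall.
    by move=> eS; move: hm; rewrite -cS eS cardsT card_ord ltnn.
  have [y [z [yS0 zS0 hyz]]] := crossing (P := mem S) (hconn n0 z0) n0S z0S.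
  have yS : y \in S by []. have zS : z \notin S by [].
  clear yS0 zS0.
  have [t1 t2 d1] := ht _ _ hyz.
  have [a ha] := prop1 (lam y *: t y [set y; z]) d1 t2.
  have anz : a != 0.
    apply: contraNneq t1 => a0; move: ha; rewrite a0 scale0r => /eqP.
    by rewrite scalemx_eq0 (negPf (lnz _ yS)).
  have uniq : forall x', x' \in S -> adj D z x' -> x' = y.
    move=> x' x'S hzx; apply/eqP; apply: contraT => nxy.
    rewrite adj_sym in hzx.
    move: (noalt hg hzx) => /negP H; case: H; apply: (@connect_trans _ _ y).
      apply: connect1; rewrite /adjm adj_sym hyz /=.
      apply/negP => /eqP e; have : y \in [set z; y] by rewrite !inE eqxx orbT.
      rewrite e !inE eq_sym (negPf nxy) /= => /eqP yz; by rewrite -yz yS in zS.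
    have c1 : connect (adjS S) y x'.
      apply: (@connect_trans _ _ n0); last exact: cnS.
      by rewrite (sym_connect_sym (@adjS_sym S)); apply: cnS.
    apply: (connect_sub _ c1) => p q /andP[/andP[hpq pS] qS]; apply: connect1.
    rewrite /adjm hpq /=; apply/negP => /eqP e.
    have : z \in [set p; q] by rewrite e !inE eqxx orbT.
    by rewrite !inE => /orP[]/eqP zz; move: zS; rewrite zz ?pS ?qS.
  pose lam' := fun v => if v == z then a else lam v.
  exists (z |: S), lam'; split.
  - by rewrite cardsU1 zS cS.
  - by rewrite !inE n0S orbT.
  - have sub : subrel (adjS S) (connect (adjS (z |: S))).
      move=> p q /andP[/andP[hpq pS] qS]; apply: connect1.
      by rewrite /adjS hpq !inE pS qS !orbT.
    move=> b; rewrite !inE => /orP[/eqP ->|bS]; last by apply: (connect_sub sub); apply: cnS.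
    apply: (@connect_trans _ _ y); first by apply: (connect_sub sub); apply: cnS.
    by apply: connect1; rewrite /adjS hyz !inE yS eqxx !orbT.
  - by move=> v; rewrite !inE /lam'; case: (eqVneq v z) => [_|vz] //= vS; apply: lnz.
  - move=> x x' hx hx'; rewrite /lam'.
    case: (eqVneq x z) => [ex|xz]; case: (eqVneq x' z) => [ex'|x'z].
    + by rewrite ex ex' /adj eqxx.
    + have x'S : x' \in S by move: hx'; rewrite !inE (negPf x'z).
      rewrite ex => hzx; have ey := uniq _ x'S hzx; subst x'.
      by rewrite setUC ha.
    + have xS : x \in S by move: hx; rewrite !inE (negPf xz).
      rewrite ex' => hxz; rewrite adj_sym in hxz; have ey := uniq _ xS hxz; subst x.
      by rewrite ha.
    + have x'S : x' \in S by move: hx'; rewrite !inE (negPf x'z).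
      have xS : x \in S by move: hx; rewrite !inE (negPf xz).
      by apply: hS.
have [S [lam [cS _ _ lnz hS]]] := key n (leq_trans (ltn0Sn _) (ltn_ord n0)) (leqnn n).
have eS : S = setT by apply/eqP; rewrite eqEcard subsetT cardsT card_ord cS leqnn.
exists lam; split.
  by move=> v; apply: lnz; rewrite eS inE.
by move=> x y; apply: hS; rewrite eS inE.
Qed.
End G.


Lemma nz_free (k : fieldType) p q (A : 'M[k]_(p,q)) : p = 1%N -> A != 0 -> row_free A.
Proof.
move=> hp hA; rewrite -row_leq_rank; have : \rank A != 0%N by rewrite mxrank_eq0.
have := rank_leq_row A; lia.
Qed.

Theorem mainTheorem7 (k : fieldType) (n : nat) (D : {set {set 'I_n}})
    (M : gmod k n) :
  simplicial_graph D -> connected_cx D -> genus k D = 0%N ->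
  fingen M -> sqfree M -> indecomposable M ->
  support_on M D -> loc_rank1 M D -> multideg0 M ->
  exists N : gmod k n, giso M N /\
    exists (bv : forall v : 'I_n, 'rV[k]_(gdim N (ind [set v])))
           (be : forall F : {set 'I_n}, 'rV[k]_(gdim N (ind F))),
      [/\ forall v, bv v != 0,
          forall F, F \in D -> #|F| = 2%N -> be F != 0 &
          forall (v : 'I_n) (F : {set 'I_n}), F \in D -> #|F| = 2%N -> v \in F ->
            bv v *m gmul N (ind [set v]) (ind F) = be F].
Proof.
move=> [hdown hvert hcard [F0 /andP[F0D /eqP F0c]]] hconn hg _ hsq [_ hnd] hsup hloc hmd.
have dv : forall v, gdim M (ind [set v]) = 1%N.
  by move=> v; have /eqP := hmd v; rewrite subr_eq0 => /eqP [] .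
have de : forall F, F \in D -> #|F| = 2%N -> gdim M (ind F) = 1%N := hloc.
have [v0 _] : exists v0 : 'I_n, v0 \in F0.
  by apply/set0Pn; rewrite -card_gt0 F0c.
have NZ : forall F, F \in D -> #|F| = 2%N -> forall v, v \in F ->
    gmul M (ind [set v]) (ind F) != 0.
  move=> F FD Fc v vF; apply/negP => /eqP gv0.
  have [w [wv eF]] := other Fc vF.
  have d0 : set0 \in D by apply: (hdown _ _ (hvert v0)); rewrite sub0set.
  have adjvw : adj D v w by rewrite /adj eq_sym wv -eF FD.
  apply: hnd.
  have hc2 : forall F, F \in D -> (#|F| <= 2)%N := hcard.
  case: (eqVneq (gmul M (ind [set w]) (ind F)) 0) => [gw0|gwn].
  - apply: (GD2 hsq hsup (cls := fun s => s == F)) => //.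
    + move=> x; have -> : (set0 == F) = false.
        by apply/negP => /eqP e; rewrite -e cards0 in Fc.
      have -> : ([set x] == F) = false.
        by apply/negP => /eqP e; rewrite -e cards1 in Fc.
      by [].
    + move=> t x tD tc xt; have -> : ([set x] == F) = false.
        by apply/negP => /eqP e; rewrite -e cards1 in Fc.
      have [et|ne] := eqVneq t F; last by [].
      move=> _; move: xt; rewrite et eF !inE => /orP[]/eqP ->; rewrite -eF //.
    + by exists F; rewrite eqxx FD de.
    + exists [set v]; rewrite hvert dv; split => //.
      by apply/negP => /eqP e; rewrite -e cards1 in Fc.
  pose g := fun s t : {set 'I_n} => gmul M (ind s) (ind t).
  pose G := fun y z => [&& adj D y z, g [set y] [set y; z] != 0 & g [set z] [set y; z] != 0].
  pose C := [set y | connect G w y].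
  have zstep : forall e x y, e \in D -> #|e| = 2%N -> x \in e -> y \in e ->
      g set0 [set x] *m g [set x] e = 0 -> g [set y] e != 0 -> g set0 [set y] = 0.
    move=> e x y eD ec xe ye h0 hy.
    have l1 : forall z : 'I_n, degle (ind set0) (ind [set z]) by move=> z; apply: ind_le; rewrite sub0set.
    have l2 : forall z : 'I_n, z \in e -> degle (ind [set z]) (ind e) by move=> z ze; apply: ind_le; rewrite sub1set.
    apply/eqP; rewrite -(mulmx_free_eq0 _ (nz_free (dv y) hy)).
    by rewrite /g (gmul_comp M (l1 y) (l2 y ye)) -(gmul_comp M (l1 x) (l2 x xe)) -/g h0.
  have Z : forall y, y \in C -> g set0 [set y] = 0.
    have gen : forall p b, path G b p -> g set0 [set b] = 0 -> g set0 [set last b p] = 0.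
      elim=> [|a p IH] b //= /andP[hG hp] hb.
    apply: IH => //; case/and3P: hG => hab h1 h2.
    apply: (zstep [set b; a] b) => //.
    - by case/andP: hab.
    - by rewrite cards2; case/andP: hab => ->.
    - by rewrite !inE eqxx.
    - by rewrite !inE eqxx orbT.
    - by rewrite hb mul0mx.
    move=> y; rewrite inE => /connectP [p hp ->]; apply: gen => //.
    apply: (zstep F v) => //; first by rewrite eF !inE eqxx orbT.
    by rewrite /g gv0 mulmx0.
  pose cls := fun s : {set 'I_n} =>
    [&& s != set0, [forall y in s, (y \in C) || (g [set y] s == 0)] & [exists y in s, y \in C]].
  have clsv : forall x, cls [set x] = (x \in C).
    move=> x; rewrite /cls; have -> : ([set x] != set0) by apply/set0Pn; exists x; rewrite inE.
    case hx: (x \in C) => /=.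
      apply/andP; split.
        by apply/forallP => y; apply/implyP; rewrite inE => /eqP ->; rewrite hx.
      by apply/existsP; exists x; rewrite inE eqxx hx.
    by apply/negP => /andP[_ /existsP [y /andP[]]]; rewrite inE => /eqP ->; rewrite hx.
  have wC : w \in C by rewrite inE connect0.
  have vC : v \notin C.
    rewrite inE; apply/negP => hc.
    move: (noalt hg adjvw) => /negP; apply.
    apply: (connect_sub _ hc) => a b /and3P [hab h1 h2]; apply: connect1.
    rewrite /adjm hab /=; apply/negP => /eqP e.
    have : v \in [set a; b] by rewrite e !inE eqxx.
    rewrite -eF in e.
    by rewrite !inE => /orP[]/eqP ev; [move: h1|move: h2]; rewrite e -ev /g gv0 eqxx.
  apply: (GD2 hsq hsup (cls := cls)) => //.
  - move=> x; rewrite clsv /cls eqxx /= => hx; apply: Z.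
    by move: hx; case: (x \in C).
  - move=> t x tD tc xt; rewrite clsv.
    have [z [zx et]] := other tc xt.
    have xz : x != z by rewrite eq_sym.
    case xC: (x \in C) => hne.
      apply/eqP; apply: contraT => gx.
      have zC : (z \in C) || (g [set z] t == 0).
        case zC: (z \in C) => //=; apply: contraT => gz.
        have : z \in C.
          rewrite inE; apply: (connect_trans (_ : connect G w x)).
            by move: xC; rewrite inE.
          apply: connect1; rewrite /G /adj xz; have -> : [set x; z] = t by rewrite et.
          by rewrite tD /g gx gz.
        by rewrite zC.
      suff ct : cls t by rewrite ct in hne.
      rewrite /cls.
      apply/and3P; split.
      + by apply/set0Pn; exists x.
      + apply/forallP => y; apply/implyP; rewrite {1}et in_set2 => /orP[]/eqP ->.
          by rewrite xC.
        by [].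

      + by apply/existsP; exists x; rewrite xt xC.
    have : cls t by move: hne; case: (cls t).
    case/and3P => _ /forallP /(_ x); rewrite xt xC /= => /eqP h _.
    exact: h.
  - by exists [set w]; rewrite hvert clsv wC dv.
  - by exists [set v]; rewrite hvert clsv vC dv.
pose t := fun (v : 'I_n) (F : {set 'I_n}) =>
  (const_mx 1 : 'rV[k]_(gdim M (ind [set v]))) *m gmul M (ind [set v]) (ind F).
have tnz : forall F, F \in D -> #|F| = 2%N -> forall v, v \in F -> t v F != 0.
  move=> F FD Fc v vF; rewrite /t mulmx_free_eq0 ?constmx_neq0 ?dv //.
  exact: nz_free (dv v) (NZ F FD Fc v vF).
have ht : forall x y, adj D x y -> [/\ t x [set x; y] != 0, t y [set x; y] != 0
                                    & gdim M (ind [set x; y]) = 1%N].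
  move=> x y /andP[xy hD].
  have c2 : #|[set x; y]| = 2%N by rewrite cards2 xy.
  split; [apply: tnz | apply: tnz | apply: de] => //; by rewrite !inE eqxx ?orbT.
have [lam [lnz hl]] := propagate hg hconn v0 (d := fun F => gdim M (ind F)) (t := t) ht.
exists M; split.
  exists (fun a => 1%:M); split => a; first exact: isomx1.
  by move=> b _; rewrite mul1mx mulmx1.
exists (fun v => lam v *: const_mx 1),
  (fun F : {set 'I_n} => if [pick v in F] is Some p then lam p *: t p F else 0); split.
- by move=> v; rewrite scalemx_eq0 negb_or lnz constmx_neq0 // dv.
- move=> F FD Fc; case: pickP => [p pF|none].
    by rewrite scalemx_eq0 negb_or lnz tnz.
  by move: Fc; rewrite (eq_card0 none).
- move=> v F FD Fc vF; case: pickP => [p pF|none]; last by move: (none v); rewrite vF.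
  rewrite -scalemxAl -/(t v F).
  have [->//|vp] := eqVneq v p.
  have [w [wv eF]] := other Fc vF.
  have ep : p = w by move: pF; rewrite eF !inE eq_sym (negPf vp) => /eqP.
  rewrite ep in vp *.
  have hadj : adj D v w by rewrite /adj vp -eF FD.
  have := hl v w hadj.
  by rewrite -eF.
Qed.
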